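(* Let $f:M\to\mathbb R^4=\mathbb H$ be a conformal immersion of a Riemann surface with left normal $N$, and let $\alpha:\tilde M\to\mathbb H$ be a nowhere vanishing, non-constant holomorphic section (i.e. $*d\alpha=N\,d\alpha$) on the universal cover $\tilde M$. Define $\hat T$ by $df\,\hat T\alpha=-d\alpha$ and put $\nu=\hat T\alpha$, $\psi=\begin{pmatrix} f\\ 1\end{pmatrix}$, $e=\begin{pmatrix}1\\0\end{pmatrix}$. Then the prolongation of $\varphi=\pi e\alpha$ is $$\hat\varphi=\psi\nu+e\alpha,$$ i.e. $\hat\varphi$ is the unique lift of $\varphi$ with $\pi\,d\hat\varphi=0$. In particular, if the Darboux transform $\hat f=\hat\varphi\mathbb H$ associated to $\alpha$ maps into $\mathbb R^4$ rather than $S^4$, that is if $\hat T$ is nowhere vanishing, then $\hat f=f+T:M\to\mathbb R^4$ with $T=\hat T^{-1}$.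
   Context: $\mathbb H^2$ is a right quaternionic vector space; $S^4=\mathbb{HP}^1$ with $\mathbb R^4=\mathbb H$ embedded via $x\mapsto\begin{pmatrix}x\\1\end{pmatrix}\mathbb H$. $V=M\times\mathbb H^2$ is the trivial bundle with trivial connection $d$, $L=\psi\mathbb H\subset V$ the line bundle given by $f$, and $\pi:V\to V/L$ the canonical projection. The left normal $N$ of $f$ satisfies $*df=N\,df$. Via $\pi e$, $V/L$ is identified with the trivial $\mathbb H$ bundle, and a section $\varphi=\pi e\alpha$ is holomorphic iff $*d\alpha=N\,d\alpha$. A lift $\hat\varphi$ of $\varphi$ means $\pi\hat\varphi=\varphi$; the unique lift with $\pi d\hat\varphi=0$ is called the prolongation of $\varphi$. *)

(* Defs.v *)
From HB Require Import structures.
From mathcomp Require Import all_boot all_order all_algebra.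
From mathcomp Require Import all_classical all_reals all_analysis.
Set Implicit Arguments. Unset Strict Implicit. Unset Printing Implicit Defensive.
Import Order.TTheory GRing.Theory Num.Theory.
Import numFieldNormedType.Exports.
Local Open Scope classical_set_scope.
Local Open Scope ring_scope.

Definition quat (R : realType) := 'rV[R]_4.

Section Quat.
Variable R : realType.

Definition mkq (a b c d : R) : quat R := \row_(i < 4) nth 0 [:: a; b; c; d] i.
Definition qc (q : quat R) (i : nat) : R := q ord0 (inord i).

(* Hamilton product: 1, i, j, k with i j = k *)
Definition qmul (p q : quat R) : quat R :=
  mkq (qc p 0 * qc q 0 - qc p 1 * qc q 1 - qc p 2 * qc q 2 - qc p 3 * qc q 3)
      (qc p 0 * qc q 1 + qc p 1 * qc q 0 + qc p 2 * qc q 3 - qc p 3 * qc q 2)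
      (qc p 0 * qc q 2 - qc p 1 * qc q 3 + qc p 2 * qc q 0 + qc p 3 * qc q 1)
      (qc p 0 * qc q 3 + qc p 1 * qc q 2 - qc p 2 * qc q 1 + qc p 3 * qc q 0).

Definition qone : quat R := mkq 1 0 0 0.
Definition qconj (q : quat R) : quat R := mkq (qc q 0) (- qc q 1) (- qc q 2) (- qc q 3).
Definition qnorm2 (q : quat R) : R := qc q 0 ^+ 2 + qc q 1 ^+ 2 + qc q 2 ^+ 2 + qc q 3 ^+ 2.
Definition qinv (q : quat R) : quat R := (qnorm2 q)^-1 *: qconj q.
Definition qdot (p q : quat R) : R := \sum_(i < 4) p ord0 i * q ord0 i.

Definition H2 := (quat R * quat R)%type.
Definition addV (v w : H2) : H2 := (v.1 + w.1, v.2 + w.2).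
Definition scaleV (v : H2) (l : quat R) : H2 := (qmul v.1 l, qmul v.2 l).
Definition eV : H2 := (qone, 0).
(* the line v H spanned by v (a point of HP^1 when v <> 0) *)
Definition qline (v : H2) : set H2 := [set w | exists l, w = scaleV v l].

(* ---------- the surface: an open set U of R^2 = C ---------- *)
Definition Jrot (X : 'rV[R]_2) : 'rV[R]_2 :=
  \row_(i < 2) nth 0 [:: - X ord0 (inord 1); X ord0 (inord 0)] i.
Definition ex : 'rV[R]_2 := \row_(i < 2) nth 0 [:: 1; 0] i.
Definition ey : 'rV[R]_2 := \row_(i < 2) nth 0 [:: 0; 1] i.

Fixpoint Cn_on (W : normedModType R) (n : nat) (U : set 'rV[R]_2)
    (g : 'rV[R]_2 -> W) : Prop :=
  match n with
  | 0 => forall p, U p -> differentiable g p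
  | n'.+1 => (forall p, U p -> differentiable g p) /\
             forall X : 'rV[R]_2, Cn_on n' U (fun p => 'D_X g p)
  end.
Definition smooth_on (W : normedModType R) (U : set 'rV[R]_2) (g : 'rV[R]_2 -> W) :=
  forall n, Cn_on n U g.

Definition psiV (f : 'rV[R]_2 -> quat R) (p : 'rV[R]_2) : H2 := (f p, qone).

(* pi : V -> V/L, with V/L identified with H via pi e:
   pi_rel f p v l  <->  pi v = pi (e l)  at the point p,
   i.e. v - e l lies in the fibre L_p = psi(p) H *)
Definition pi_rel (f : 'rV[R]_2 -> quat R) (p : 'rV[R]_2) (v : H2) (l : quat R) : Prop :=
  exists mu, v = addV (scaleV eV l) (scaleV (psiV f p) mu).

Definition dV (X : 'rV[R]_2) (chi : 'rV[R]_2 -> H2) (p : 'rV[R]_2) : H2 :=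
  ('D_X (fun q => (chi q).1) p, 'D_X (fun q => (chi q).2) p).

Definition conformal_immersion (U : set 'rV[R]_2) (f : 'rV[R]_2 -> quat R) : Prop :=
  smooth_on U f /\
  forall p, U p ->
    'D_ex f p != 0 /\ qdot ('D_ex f p) ('D_ey f p) = 0 /\
    qdot ('D_ex f p) ('D_ex f p) = qdot ('D_ey f p) ('D_ey f p).

(* N is the left normal of f:  *df = N df, with ( *omega)(X) = omega(J X) *)
Definition left_normal (U : set 'rV[R]_2) (f N : 'rV[R]_2 -> quat R) : Prop :=
  forall p, U p -> qmul (N p) (N p) = - qone /\
    forall X, 'D_(Jrot X) f p = qmul (N p) ('D_X f p).

(* holomorphic section alpha of V/L (phi = pi e alpha):  *d alpha = N d alpha *)
Definition holomorphic_sec (U : set 'rV[R]_2) (N alpha : 'rV[R]_2 -> quat R) : Prop :=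
  smooth_on U alpha /\
  forall p, U p -> forall X, 'D_(Jrot X) alpha p = qmul (N p) ('D_X alpha p).

Definition is_prolongation (U : set 'rV[R]_2) (f alpha : 'rV[R]_2 -> quat R)
    (chi : 'rV[R]_2 -> H2) : Prop :=
  smooth_on U (fun p => (chi p).1) /\ smooth_on U (fun p => (chi p).2) /\
  forall p, U p -> pi_rel f p (chi p) (alpha p) /\
                   forall X, pi_rel f p (dV X chi p) 0.

End Quat.

(* Main.v *)
Require Import Defs.
From HB Require Import structures.
From mathcomp Require Import all_boot all_order all_algebra.
From mathcomp Require Import all_classical all_reals all_analysis.
From mathcomp Require Import ring lra.
Import Order.TTheory GRing.Theory Num.Theory.
Import numFieldNormedType.Exports.
Local Open Scope classical_set_scope.
Local Open Scope ring_scope.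

Set Implicit Arguments. Unset Strict Implicit. Unset Printing Implicit Defensive.

Section QAlg.
Variable R : realType.
Implicit Types p q r : quat R.

Lemma qc_mkq0 (a b c d : R) : qc (mkq a b c d) 0 = a.
Proof. by rewrite /qc /mkq mxE inordK. Qed.
Lemma qc_mkq1 (a b c d : R) : qc (mkq a b c d) 1 = b.
Proof. by rewrite /qc /mkq mxE inordK. Qed.
Lemma qc_mkq2 (a b c d : R) : qc (mkq a b c d) 2 = c.
Proof. by rewrite /qc /mkq mxE inordK. Qed.
Lemma qc_mkq3 (a b c d : R) : qc (mkq a b c d) 3 = d.
Proof. by rewrite /qc /mkq mxE inordK. Qed.
Definition qc_mkq := (qc_mkq0, qc_mkq1, qc_mkq2, qc_mkq3).

Lemma qE q : q = mkq (qc q 0) (qc q 1) (qc q 2) (qc q 3).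
Proof.
apply/rowP => i; rewrite /mkq mxE /qc.
case: i => [[|[|[|[|n]]]] Hi] /=; try (congr (q _ _); apply/val_inj; by rewrite /= inordK).
by [].
Qed.

Lemma q_ext p q : qc p 0 = qc q 0 -> qc p 1 = qc q 1 -> qc p 2 = qc q 2 ->
  qc p 3 = qc q 3 -> p = q.
Proof. by move=> h0 h1 h2 h3; rewrite (qE p) (qE q) h0 h1 h2 h3. Qed.

Lemma qcD p q k : qc (p + q) k = qc p k + qc q k.
Proof. by rewrite /qc mxE. Qed.
Lemma qcN p k : qc (- p) k = - qc p k.
Proof. by rewrite /qc mxE. Qed.
Lemma qcZ (a : R) p k : qc (a *: p) k = a * qc p k.
Proof. by rewrite /qc mxE. Qed.
Lemma qc0 k : qc (0 : quat R) k = 0.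
Proof. by rewrite /qc mxE. Qed.

Definition qsimp := (qc_mkq, qcD, qcN, qcZ, qc0).

Lemma qmulA p q r : qmul p (qmul q r) = qmul (qmul p q) r.
Proof. apply: q_ext; rewrite /qmul !qsimp; ring. Qed.
Lemma qmulDr p q r : qmul p (q + r) = qmul p q + qmul p r.
Proof. apply: q_ext; rewrite /qmul !qsimp; ring. Qed.
Lemma qmulDl p q r : qmul (p + q) r = qmul p r + qmul q r.
Proof. apply: q_ext; rewrite /qmul !qsimp; ring. Qed.
Lemma qmulNr p q : qmul p (- q) = - qmul p q.
Proof. apply: q_ext; rewrite /qmul !qsimp; ring. Qed.
Lemma qmulNl p q : qmul (- p) q = - qmul p q.
Proof. apply: q_ext; rewrite /qmul !qsimp; ring. Qed.
Lemma qmul1l q : qmul (qone R) q = q.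
Proof. apply: q_ext; rewrite /qmul /qone !qsimp; ring. Qed.
Lemma qmul1r q : qmul q (qone R) = q.
Proof. apply: q_ext; rewrite /qmul /qone !qsimp; ring. Qed.
Lemma qmul0l q : qmul 0 q = 0.
Proof. apply: q_ext; rewrite /qmul !qsimp; ring. Qed.
Lemma qmul0r q : qmul q 0 = 0.
Proof. apply: q_ext; rewrite /qmul !qsimp; ring. Qed.

Lemma qnorm2_eq0 q : qnorm2 q = 0 -> q = 0.
Proof.
rewrite /qnorm2 => H.
have h0 : 0 <= qc q 0 ^+ 2 := sqr_ge0 _.
have h1 : 0 <= qc q 1 ^+ 2 := sqr_ge0 _.
have h2 : 0 <= qc q 2 ^+ 2 := sqr_ge0 _.
have h3 : 0 <= qc q 3 ^+ 2 := sqr_ge0 _.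
have e0 : qc q 0 ^+ 2 = 0 by lra.
have e1 : qc q 1 ^+ 2 = 0 by lra.
have e2 : qc q 2 ^+ 2 = 0 by lra.
have e3 : qc q 3 ^+ 2 = 0 by lra.
apply: q_ext; rewrite qc0; apply/eqP; rewrite -sqrf_eq0; apply/eqP; assumption.
Qed.

Lemma qinvl q : q != 0 -> qmul (qinv q) q = qone R.
Proof.
move=> qn0; have n0 : qnorm2 q != 0 by apply/eqP => /qnorm2_eq0; apply/eqP.
apply: q_ext; rewrite /qmul /qinv /qconj /qone !qsimp; move: n0; rewrite /qnorm2 => n0;
 field; exact: n0.
Qed.
Lemma qinvr q : q != 0 -> qmul q (qinv q) = qone R.
Proof.
move=> qn0; have n0 : qnorm2 q != 0 by apply/eqP => /qnorm2_eq0; apply/eqP.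
apply: q_ext; rewrite /qmul /qinv /qconj /qone !qsimp; move: n0; rewrite /qnorm2 => n0;
 field; exact: n0.
Qed.
End QAlg.
Section Loc.
Variable R : realType.

Lemma near_eq_diff (V W : normedModType R) (f g : V -> W) x :
  (\near x, f x = g x) -> differentiable f x -> differentiable g x.
Proof.
move=> fg df.
have Lf := diff_locally df.
have gx : g x = f x by rewrite (nbhs_singleton fg).
have Lg : g \o shift x = cst (g x) + 'd f x +o_ 0 id.
  apply/eqaddoP; move: Lf => /eqaddoP Lf eps heps.
  have := Lf eps heps.
  have : \forall y \near 0, f (y + x) = g (y + x).
    by move: fg; rewrite (near_shift 0) subr0.
  move=> H1 H2; near=> y.
  have E1 : f (y + x) = g (y + x) by near: y.
  have -> : (g \o shift x - (cst (g x) + 'd f x)) y = (f \o shift x - (cst (f x) + 'd f x)) y.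
    by rewrite !fctE /= E1 gx.
  by near: y.
Unshelve. all: try by end_near.
have dg : 'd g x = 'd f x :> (V -> W) := diff_unique (diff_continuous df) Lg.
by apply/diff_locallyP; rewrite dg; split; [exact: diff_continuous | exact: Lg].
Qed.

Variables (U : set 'rV[R]_2) (hU : open U).
Local Notation V2 := 'rV[R]_2.

Lemma nearU p : U p -> \forall y \near p, U y.
Proof. by move=> Up; apply: hU. Qed.

Lemma dder (W : normedModType R) (g : V2 -> W) p X :
  differentiable g p -> derivable g p X.
Proof. move=> h; exact: diff_derivable. Qed.

Lemma Cn_diffp (W : normedModType R) n (g : V2 -> W) p :
  Cn_on n U g -> U p -> differentiable g p.
Proof. by case: n => [|n] /=; [move=> H|move=> [H _]]; apply: H. Qed.

Lemma Cn_mono (W : normedModType R) n (g : V2 -> W) : Cn_on n.+1 U g -> Cn_on n U g.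
Proof.
elim: n g => [|n IH] g /= [H1 H2]; first done.
by split => // X; apply: IH; exact: H2.
Qed.

Lemma Cn_D (W : normedModType R) n (g : V2 -> W) X :
  Cn_on n.+1 U g -> Cn_on n U (fun p => 'D_X g p).
Proof. by move=> /= [_]; apply. Qed.

Lemma Cn_loc (W : normedModType R) n (g h : V2 -> W) :
  (forall p, U p -> g p = h p) -> Cn_on n U g -> Cn_on n U h.
Proof.
elim: n g h => [|n IH] g h gh /=.
- move=> H p Up; apply: (near_eq_diff _ (H p Up)).
  by near=> y; apply: gh; near: y; exact: nearU.
- move=> [H1 H2]; split.
  + move=> p Up; apply: (near_eq_diff _ (H1 p Up)).
    by near=> y; apply: gh; near: y; exact: nearU.
  + move=> X; apply: (IH _ _ _ (H2 X)) => p Up; apply: near_eq_derive.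
    by near=> y; apply: gh; near: y; exact: nearU.
Unshelve. all: try by end_near.
Qed.

Lemma Cn_cst (W : normedModType R) n (c : W) : Cn_on n U (fun _ => c).
Proof.
elim: n c => [|n IH] c /=; first by move=> p _; exact: differentiable_cst.
split; first by move=> p _; exact: differentiable_cst.
move=> X; apply: (@Cn_loc _ _ (fun _ => 0)); last exact: IH.
by move=> p _; rewrite derive_cst.
Qed.

Lemma Cn_add (W : normedModType R) n (g h : V2 -> W) :
  Cn_on n U g -> Cn_on n U h -> Cn_on n U (fun x => g x + h x).
Proof.
elim: n g h => [|n IH] g h Hg Hh.
  move=> p Up; exact: (differentiableD (Cn_diffp Hg Up) (Cn_diffp Hh Up)).
split; first by move=> p Up; exact: (differentiableD (Cn_diffp Hg Up) (Cn_diffp Hh Up)).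
move=> X; apply: (@Cn_loc _ _ (fun p => 'D_X g p + 'D_X h p)); last first.
  by apply: IH; apply: Cn_D.
move=> p Up; rewrite (deriveD (@dder _ _ _ X (Cn_diffp Hg Up)) (@dder _ _ _ X (Cn_diffp Hh Up))).
by [].
Qed.

Lemma Cn_opp (W : normedModType R) n (g : V2 -> W) :
  Cn_on n U g -> Cn_on n U (fun x => - g x).
Proof.
elim: n g => [|n IH] g Hg.
  move=> p Up; exact: (differentiableN (Cn_diffp Hg Up)).
split; first by move=> p Up; exact: (differentiableN (Cn_diffp Hg Up)).
move=> X; apply: (@Cn_loc _ _ (fun p => - 'D_X g p)); last first.
  by apply: IH; apply: Cn_D.
move=> p Up; rewrite (deriveN (@dder _ _ _ X (Cn_diffp Hg Up))).
by [].
Qed.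

Lemma Cn_mulR n (g h : V2 -> R) :
  Cn_on n U g -> Cn_on n U h -> Cn_on n U (fun x => g x * h x).
Proof.
elim: n g h => [|n IH] g h Hg Hh.
  move=> p Up; exact: (differentiableM (Cn_diffp Hg Up) (Cn_diffp Hh Up)).
split; first by move=> p Up; exact: (differentiableM (Cn_diffp Hg Up) (Cn_diffp Hh Up)).
move=> X; apply: (@Cn_loc _ _ (fun p => g p * 'D_X h p + h p * 'D_X g p)); last first.
  apply: Cn_add; apply: IH; try apply: Cn_D => //; exact: Cn_mono.
move=> p Up; rewrite (deriveM (@dder _ _ _ X (Cn_diffp Hg Up)) (@dder _ _ _ X (Cn_diffp Hh Up))).
by [].
Qed.

Lemma Cn_invR n (g : V2 -> R) : (forall p, U p -> g p != 0) ->
  Cn_on n U g -> Cn_on n U (fun x => (g x)^-1).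
Proof.
move=> g0; elim: n g g0 => [|n IH] g g0 Hg.
  move=> p Up; exact: (differentiableV (Cn_diffp Hg Up) (g0 p Up)).
split; first by move=> p Up; exact: (differentiableV (Cn_diffp Hg Up) (g0 p Up)).
move=> X; apply: (@Cn_loc _ _ (fun p => - ((g p)^-1 * (g p)^-1) * 'D_X g p)); last first.
  apply: Cn_mulR; last exact: Cn_D.
  apply: Cn_opp; apply: Cn_mulR; apply: IH => //; exact: Cn_mono.
move=> p Up; rewrite (deriveV (g0 p Up) (@dder _ _ _ X (Cn_diffp Hg Up))).
by rewrite -invfM.
Qed.

Lemma Cn_scalel (W : normedModType R) n (a : V2 -> R) (w : W) :
  Cn_on n U a -> Cn_on n U (fun x => a x *: w).
Proof.
elim: n a => [|n IH] a Ha.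
  move=> p Up; exact: differentiableZl (Cn_diffp Ha Up).
split; first by move=> p Up; exact: differentiableZl (Cn_diffp Ha Up).
move=> X; apply: (@Cn_loc _ _ (fun p => 'D_X a p *: w)); last first.
  by apply: IH; apply: Cn_D.
move=> p Up; have Da := Cn_diffp Ha Up.
have DZ := differentiableZl w Da.
by rewrite [RHS]deriveE // diffZl // deriveE.
Qed.

Lemma qbasis (a b c d : R) : mkq a b c d =
  a *: mkq 1 0 0 0 + b *: mkq 0 1 0 0 + c *: mkq 0 0 1 0 + d *: mkq 0 0 0 1.
Proof. apply: q_ext; rewrite !qsimp; ring. Qed.

Lemma Cn_q_of n (g : V2 -> quat R) :
  Cn_on n U (fun x => qc (g x) 0) -> Cn_on n U (fun x => qc (g x) 1) ->
  Cn_on n U (fun x => qc (g x) 2) -> Cn_on n U (fun x => qc (g x) 3) ->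
  Cn_on n U g.
Proof.
move=> H0 H1 H2 H3.
have -> : g = fun x => qc (g x) 0 *: mkq 1 0 0 0 + qc (g x) 1 *: mkq 0 1 0 0
   + qc (g x) 2 *: mkq 0 0 1 0 + qc (g x) 3 *: mkq 0 0 0 1.
  by apply: funext => x; rewrite -qbasis -qE.
by apply: Cn_add; [apply: Cn_add; [apply: Cn_add|]|]; apply: Cn_scalel.
Qed.

Lemma diff_qc (g : V2 -> quat R) p k :
  differentiable g p -> differentiable (fun x => qc (g x) k) p.
Proof.
move=> dg; rewrite /qc.
have := differentiable_comp dg (differentiable_coord (g p) ord0 (inord k)).
by [].
Qed.

Lemma D_qc (g : V2 -> quat R) p X k : differentiable g p ->
  'D_X (fun x => qc (g x) k) p = qc ('D_X g p) k.
Proof.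
move=> dg; rewrite [in RHS](derive_mx (@dder _ _ _ X dg)) /qc mxE.
by [].
Qed.

Lemma Cn_qc n (g : V2 -> quat R) k :
  Cn_on n U g -> Cn_on n U (fun x => qc (g x) k).
Proof.
elim: n g => [|n IH] g Hg.
  move=> p Up; exact: diff_qc (Cn_diffp Hg Up).
split; first by move=> p Up; exact: diff_qc (Cn_diffp Hg Up).
move=> X; apply: (@Cn_loc _ _ (fun p => qc ('D_X g p) k)); last first.
  by apply: IH; apply: Cn_D.
by move=> p Up; rewrite D_qc //; exact: (Cn_diffp Hg Up).
Qed.

Ltac cn_auto := repeat first [ apply: Cn_add | apply: Cn_opp | apply: Cn_mulR
   | apply: Cn_qc | apply: Cn_cst | assumption ].

Lemma Cn_qmul n (g h : V2 -> quat R) :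
  Cn_on n U g -> Cn_on n U h -> Cn_on n U (fun x => qmul (g x) (h x)).
Proof.
move=> Hg Hh; apply: Cn_q_of; rewrite /qmul; under eq_fun do rewrite qc_mkq; cn_auto.
Qed.


Lemma Cn_qinv n (g : V2 -> quat R) : (forall p, U p -> g p != 0) ->
  Cn_on n U g -> Cn_on n U (fun x => qinv (g x)).
Proof.
move=> g0 Hg; have Hn : Cn_on n U (fun x => (qnorm2 (g x))^-1).
  apply: Cn_invR.
    move=> p Up; apply/eqP => /qnorm2_eq0 E; move: (g0 p Up); by rewrite E eqxx.
  rewrite /qnorm2; under eq_fun do rewrite !expr2; cn_auto.
apply: Cn_q_of; rewrite /qinv /qconj; under eq_fun do rewrite qcZ qc_mkq; cn_auto.
Qed.

End Loc.

Section D.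
Variable R : realType.
Local Notation V2 := 'rV[R]_2.
Variables (U : set V2) (hU : open U).

Lemma dD (f g : V2 -> R) p X : derivable f p X -> derivable g p X ->
  'D_X (fun x => f x + g x) p = 'D_X f p + 'D_X g p.
Proof. exact: deriveD. Qed.
Lemma dM (f g : V2 -> R) p X : derivable f p X -> derivable g p X ->
  'D_X (fun x => f x * g x) p = f p * 'D_X g p + g p * 'D_X f p.
Proof. exact: deriveM. Qed.
Lemma dN (f : V2 -> R) p X : derivable f p X ->
  'D_X (fun x => - f x) p = - 'D_X f p.
Proof. exact: deriveN. Qed.

Lemma dvD (f g : V2 -> R) p X : derivable f p X -> derivable g p X ->
  derivable (fun x => f x + g x) p X.
Proof. exact: derivableD. Qed.
Lemma dvM (f g : V2 -> R) p X : derivable f p X -> derivable g p X ->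
  derivable (fun x => f x * g x) p X.
Proof. exact: derivableM. Qed.
Lemma dvN (f : V2 -> R) p X : derivable f p X ->
  derivable (fun x => - f x) p X.
Proof. exact: derivableN. Qed.

Ltac dv_auto := repeat match goal with
 | |- derivable (fun x => _ + _) _ _ => apply: dvD
 | |- derivable (fun x => - _) _ _ => apply: dvN
 | |- derivable (fun x => _ * _) _ _ => apply: dvM
 | H : derivable ?f ?p ?X |- derivable ?f ?p ?X => exact H
 | H : derivable ?f ?p ?X |- derivable (fun x => ?f x) ?p ?X => exact H
 end.

Lemma alg0 (A0 A1 A2 A3 B0 B1 B2 B3 dA0 dA1 dA2 dA3 dB0 dB1 dB2 dB3 : R) :
  A0 * dB0 + B0 * dA0 - (A1 * dB1 + B1 * dA1) - (A2 * dB2 + B2 * dA2) - (A3 * dB3 + B3 * dA3) =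
  dA0 * B0 - dA1 * B1 - dA2 * B2 - dA3 * B3 + (A0 * dB0 - A1 * dB1 - A2 * dB2 - A3 * dB3).
Proof. ring. Qed.

Section poly.
Local Opaque derive derivable.
Variables (a0 a1 a2 a3 b0 b1 b2 b3 : V2 -> R) (p X : V2).
Hypotheses (ha0 : derivable a0 p X) (ha1 : derivable a1 p X) (ha2 : derivable a2 p X)
  (ha3 : derivable a3 p X) (hb0 : derivable b0 p X) (hb1 : derivable b1 p X)
  (hb2 : derivable b2 p X) (hb3 : derivable b3 p X).
Local Notation D f := ('D_X f p).

Lemma dq0 : 'D_X (fun x => a0 x * b0 x - a1 x * b1 x - a2 x * b2 x - a3 x * b3 x) p =
  (D a0 * b0 p - D a1 * b1 p - D a2 * b2 p - D a3 * b3 p) +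
  (a0 p * D b0 - a1 p * D b1 - a2 p * D b2 - a3 p * D b3).
Proof. rewrite !dD ?dN. rewrite dM. rewrite dM. rewrite dM. rewrite dM. ring. all: dv_auto. Qed.
Lemma dq1 : 'D_X (fun x => a0 x * b1 x + a1 x * b0 x + a2 x * b3 x - a3 x * b2 x) p =
  (D a0 * b1 p + D a1 * b0 p + D a2 * b3 p - D a3 * b2 p) +
  (a0 p * D b1 + a1 p * D b0 + a2 p * D b3 - a3 p * D b2).
Proof. rewrite !dD ?dN. rewrite dM. rewrite dM. rewrite dM. rewrite dM. ring. all: dv_auto. Qed.
Lemma dq2 : 'D_X (fun x => a0 x * b2 x - a1 x * b3 x + a2 x * b0 x + a3 x * b1 x) p =
  (D a0 * b2 p - D a1 * b3 p + D a2 * b0 p + D a3 * b1 p) +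
  (a0 p * D b2 - a1 p * D b3 + a2 p * D b0 + a3 p * D b1).
Proof. rewrite !dD ?dN. rewrite dM. rewrite dM. rewrite dM. rewrite dM. ring. all: dv_auto. Qed.
Lemma dq3 : 'D_X (fun x => a0 x * b3 x + a1 x * b2 x - a2 x * b1 x + a3 x * b0 x) p =
  (D a0 * b3 p + D a1 * b2 p - D a2 * b1 p + D a3 * b0 p) +
  (a0 p * D b3 + a1 p * D b2 - a2 p * D b1 + a3 p * D b0).
Proof. rewrite !dD ?dN. rewrite dM. rewrite dM. rewrite dM. rewrite dM. ring. all: dv_auto. Qed.
End poly.


Local Opaque derive derivable.
Lemma D_qmul (g h : V2 -> quat R) p X : Cn_on 0 U g -> Cn_on 0 U h -> U p ->
  'D_X (fun x => qmul (g x) (h x)) p = qmul ('D_X g p) (h p) + qmul (g p) ('D_X h p).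
Proof.
move=> Hg Hh Up.
have dgh : differentiable (fun x => qmul (g x) (h x)) p := Cn_diffp (Cn_qmul hU Hg Hh) Up.
have dg := Cn_diffp Hg Up; have dh := Cn_diffp Hh Up.
have vg : forall k, derivable (fun x => qc (g x) k) p X.
  by move=> k; apply: dder; apply: diff_qc.
have vh : forall k, derivable (fun x => qc (h x) k) p X.
  by move=> k; apply: dder; apply: diff_qc.
apply: q_ext; rewrite qcD -D_qc //; under eq_fun do rewrite /qmul qc_mkq.
all: rewrite /qmul !qc_mkq -[qc ('D_X g p) 0](D_qc _ _ dg) -[qc ('D_X g p) 1](D_qc _ _ dg) -[qc ('D_X g p) 2](D_qc _ _ dg) -[qc ('D_X g p) 3](D_qc _ _ dg) -[qc ('D_X h p) 0](D_qc _ _ dh) -[qc ('D_X h p) 1](D_qc _ _ dh) -[qc ('D_X h p) 2](D_qc _ _ dh) -[qc ('D_X h p) 3](D_qc _ _ dh).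
- by rewrite dq0.
- by rewrite dq1.
- by rewrite dq2.
- by rewrite dq3.
Qed.
End D.

Unset Implicit Arguments.

Lemma scaleV_comp (R : realType) (v : H2 R) (a b : quat R) :
  scaleV (scaleV v a) b = scaleV v (qmul a b).
Proof. by rewrite /scaleV /= !qmulA. Qed.

Theorem lemma3p3 (R : realType) (U : set 'rV[R]_2)
  (f N alpha That : 'rV[R]_2 -> quat R) :
  open U ->
  conformal_immersion U f ->
  left_normal U f N ->
  holomorphic_sec U N alpha ->
  (forall p, U p -> alpha p != 0) ->
  (exists p q, U p /\ U q /\ alpha p != alpha q) ->
  (* df That alpha = - d alpha *)
  (forall p, U p -> forall X,
      qmul ('D_X f p) (qmul (That p) (alpha p)) = - 'D_X alpha p) ->
  let nu := fun p => qmul (That p) (alpha p) in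
  let phihat := fun p => addV (scaleV (psiV f p) (nu p)) (scaleV (eV R) (alpha p)) in
  [/\ is_prolongation U f alpha phihat,
      (forall chi, is_prolongation U f alpha chi ->
         forall p, U p -> chi p = phihat p)
    & ((forall p, U p -> That p != 0) ->
       forall p, U p ->
         qline (phihat p) = qline (f p + qinv (That p), qone R))].
Proof.
move=> hU [Sf hf] _ [Sa _] ha0 _ hT nu phihat.
have hT' : forall p, U p -> forall X, qmul ('D_X f p) (nu p) = - 'D_X alpha p := hT.
have Dfn0 : forall p, U p -> 'D_(ex R) f p != 0 by move=> p /hf [].
have nuE : forall p, U p ->
    nu p = qmul (qinv ('D_(ex R) f p)) (- 'D_(ex R) alpha p).
  by move=> p Up; rewrite -(hT' p Up) qmulA qinvl ?qmul1l //; exact: Dfn0.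
have Snu : smooth_on U nu.
  move=> n; apply: (Cn_loc hU
     (g := fun p => qmul (qinv ('D_(ex R) f p)) (- 'D_(ex R) alpha p))).
    by move=> p Up; rewrite nuE.
  apply: (Cn_qmul hU).
    by apply: (Cn_qinv hU Dfn0); exact: Cn_D (Sf n.+1).
  by apply: (Cn_opp hU); exact: Cn_D (Sa n.+1).
have E1 : (fun q => (phihat q).1) = (fun q => qmul (f q) (nu q) + alpha q).
  by apply: funext => q; rewrite /phihat /addV /scaleV /= qmul1l.
have E2 : (fun q => (phihat q).2) = nu.
  by apply: funext => q; rewrite /phihat /addV /scaleV /= qmul1l qmul0l addr0.
have key : forall p X, U p -> 'D_X (fun q => (phihat q).1) p = qmul (f p) ('D_X nu p).
  move=> p X Up; rewrite E1 deriveD; first last.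
  - by apply: dder; exact: Cn_diffp (Sa 0) Up.
  - by apply: dder; exact: Cn_diffp (Cn_qmul hU (Sf 0) (Snu 0)) Up.
  rewrite (D_qmul hU X (Sf 0) (Snu 0) Up) (hT' p Up X).
  by rewrite addrAC addNr add0r.
split.
- split; [| split].
  + move=> n; rewrite E1; apply: (Cn_add hU); last exact: Sa.
    by apply: (Cn_qmul hU); [exact: Sf | exact: Snu].
  + by move=> n; rewrite E2; exact: Snu n.
  + move=> p Up; split.
      by exists (nu p); rewrite /phihat /addV; congr pair; exact: addrC.
    move=> X; exists ('D_X nu p); rewrite /dV key // E2 /addV /scaleV /=.
    by rewrite qmul0r qmul0l qmul1l !add0r.
- move=> chi [Sc1 [Sc2 Hc]] p Up.
  have Hm : forall q, U q -> (chi q).1 = alpha q + qmul (f q) ((chi q).2).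
    move=> q Uq; have [mu ->] := (Hc q Uq).1.
    by rewrite /addV /scaleV /= qmul1l qmul0l add0r qmul1l.
  have [mu' Hd] := (Hc p Up).2 (ex R).
  move: Hd; rewrite /dV /addV /scaleV /=; case=> D1 D2.
  rewrite qmul0r qmul0l qmul1l !add0r in D1 D2.
  have D1' : 'D_(ex R) (fun q => (chi q).1) p = 'D_(ex R) alpha p +
      (qmul ('D_(ex R) f p) ((chi p).2) + qmul (f p) ('D_(ex R) (fun q => (chi q).2) p)).
    have -> : 'D_(ex R) (fun q => (chi q).1) p =
              'D_(ex R) (fun q => alpha q + qmul (f q) ((chi q).2)) p.
      apply: near_eq_derive; near=> q; apply: Hm; near: q; exact: (nearU hU Up).
    rewrite deriveD; first last.
    - by apply: dder; exact: Cn_diffp (Cn_qmul hU (Sf 0) (Sc2 0)) Up.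
    - by apply: dder; exact: Cn_diffp (Sa 0) Up.
    by rewrite (D_qmul hU (ex R) (Sf 0) (Sc2 0) Up).
  have Hmp : qmul ('D_(ex R) f p) ((chi p).2) = - 'D_(ex R) alpha p.
    move: D1'; rewrite D1 D2 => E.
    apply/eqP; rewrite -subr_eq0 opprK; apply/eqP; apply: (addIr (qmul (f p) mu')).
    by rewrite add0r [RHS]E addrA (addrC ('D_(ex R) alpha p)).
  have mp : (chi p).2 = nu p.
    by rewrite (nuE p Up) -Hmp qmulA qinvl ?qmul1l //; exact: Dfn0.
  rewrite [chi p]surjective_pairing Hm // mp /phihat /addV /scaleV /=.
  by rewrite qmul1l qmul0l addr0 qmul1l addrC.
- move=> Tn0 p Up.
  have nun0 : nu p != 0.
    apply/eqP => E; move/eqP: (ha0 p Up); apply.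
    rewrite -[alpha p]qmul1l -(qinvl (Tn0 p Up)) -qmulA.
    by change (qmul (That p) (alpha p)) with (nu p); rewrite E qmul0r.
  have Ph : phihat p = scaleV (f p + qinv (That p), qone R) (nu p).
    rewrite /phihat /addV /scaleV /= qmulDl qmul1l qmul0l addr0 qmul1l.
    by congr pair; congr (_ + _); rewrite /nu qmulA (qinvl (Tn0 p Up)) qmul1l.
  rewrite Ph; apply/seteqP; split => w /= [l ->].
    by exists (qmul (nu p) l); rewrite scaleV_comp.
  by exists (qmul (qinv (nu p)) l); rewrite scaleV_comp qmulA qinvr ?qmul1l.
Unshelve. all: try by end_near.
Qed.
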